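(* Suppose $F$ satisfies Assumption 1 and let $v\in[0,1]$ with $F(b^*_{v,F})>0$. Let $W_{v,F}(q)=U_{v,F}(F^{-1}(q))$ for $q\in[0,1]$ and $q^*_{v,F}=F(b^*_{v,F})$. Then for every $q\in[0,1]$, $$W_{v,F}(q^*_{v,F})-W_{v,F}(q)\ \ge\ \frac14\,(q^*_{v,F}-q)^2\,W_{v,F}(q^*_{v,F}).$$
   Context: Assumption 1: $F$ is a cumulative distribution function on $[0,1]$ which is continuously differentiable with density $f=F'$ and is strictly log-concave (equivalently $f/F$ is strictly decreasing on $(0,1)$); in particular $F$ is increasing and has an inverse $F^{-1}$. $U_{v,F}(b)=(v-b)F(b)$ and $b^*_{v,F}=\max\{\operatorname{argmax}_{b\in[0,1]}U_{v,F}(b)\}$. *)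

(* Defs.v *)
From Stdlib Require Import Reals.
From Coquelicot Require Import Coquelicot.
Open Scope R_scope.

Definition Assumption1 (F f : R -> R) : Prop :=
  F 0 = 0 /\ F 1 = 1 /\
  (forall x y, 0 <= x -> x <= y -> y <= 1 -> F x <= F y) /\
  (forall x, 0 <= x <= 1 -> 0 <= f x) /\
  (forall x, 0 <= x <= 1 ->
     filterlim F (within (fun y => 0 <= y <= 1) (locally x)) (locally (F x))) /\
  (forall x, 0 < x < 1 -> is_derive F x (f x)) /\
  (forall x, 0 < x < 1 -> continuous f x) /\
  (* strict log-concavity: f/F strictly decreasing on (0,1) *)
  (forall x y, 0 < x -> x < y -> y < 1 -> f y / F y < f x / F x).

Definition U (F : R -> R) (v b : R) : R := (v - b) * F b.

Definition is_bstar (F : R -> R) (v b : R) : Prop :=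
  0 <= b <= 1 /\
  (forall c, 0 <= c <= 1 -> U F v c <= U F v b) /\
  (forall c, 0 <= c <= 1 -> U F v c = U F v b -> c <= b).

Definition is_inverse_on01 (F Finv : R -> R) : Prop :=
  forall q, 0 <= q <= 1 -> 0 <= Finv q <= 1 /\ F (Finv q) = q.

Definition W (F Finv : R -> R) (v q : R) : R := U F v (Finv q).

(* Main.v *)
Require Import Defs.
From Stdlib Require Import Reals Lra Psatz.
From Coquelicot Require Import Coquelicot.
Open Scope R_scope.

Lemma strict_mono (F f : R -> R) : Assumption1 F f ->
  forall x y, 0 <= x -> x < y -> y <= 1 -> F x < F y.
Proof.
  intros HA x y Hx Hxy Hy.
  destruct HA as (H0 & H1 & Hmon & Hf & Hc & Hd & Hfc & Hlc).
  destruct (Rlt_or_le (F x) (F y)) as [Hlt|Hle]; [exact Hlt|].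
  assert (Hconst : forall z, x <= z <= y -> F z = F x).
  { intros z Hz. assert (F x <= F z) by (apply Hmon; lra).
    assert (F z <= F y) by (apply Hmon; lra). lra. }
  set (d := (y - x) / 3).
  assert (Hdpos : 0 < d) by (unfold d; lra).
  assert (Hzero : forall z, x + d <= z <= x + 2 * d -> f z = 0).
  { intros z Hz.
    assert (Hz01 : 0 < z < 1) by (unfold d in *; lra).
    assert (HD := Hd z Hz01).
    assert (HD' : is_derive (fun _ : R => F x) z (f z)).
    { apply (is_derive_ext_loc F). 2: exact HD.
      exists (mkposreal d Hdpos). intros t Ht.
      change (Rabs (t - z) < d) in Ht. apply Rabs_lt_between in Ht.
      apply Hconst. unfold d in *; lra. }
    apply is_derive_unique in HD'.
    rewrite Derive_const in HD'. symmetry; exact HD'. }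
  assert (Hlt := Hlc (x + d) (x + 2 * d) ltac:(lra) ltac:(lra) ltac:(unfold d; lra)).
  rewrite (Hzero (x + d)) in Hlt by lra.
  rewrite (Hzero (x + 2 * d)) in Hlt by lra.
  unfold Rdiv in Hlt. rewrite !Rmult_0_l in Hlt. lra.
Qed.

Theorem lemma5 (F f Finv : R -> R) (v bstar : R) :
  Assumption1 F f ->
  is_inverse_on01 F Finv ->
  0 <= v <= 1 ->
  is_bstar F v bstar ->
  F bstar > 0 ->
  forall q, 0 <= q <= 1 ->
    W F Finv v (F bstar) - W F Finv v q >=
      / 4 * (F bstar - q) ^ 2 * W F Finv v (F bstar).
Proof.
  intros HA HI Hv HB Hpos q Hq.
  pose proof (strict_mono F f HA) as SM.
  destruct HA as (H0 & H1 & Hmon & Hf & Hc & Hd & Hfc & Hlc).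
  destruct HB as (Hb01 & Hmax & Hlast).
  assert (Hinj : forall x y, 0 <= x <= 1 -> 0 <= y <= 1 -> F x = F y -> x = y).
  { intros x y Hx Hy Hxy. destruct (Rtotal_order x y) as [h|[h|h]]; auto.
    - assert (F x < F y) by (apply SM; lra). lra.
    - assert (F y < F x) by (apply SM; lra). lra. }
  assert (Hqs1 : F bstar <= 1) by (rewrite <- H1; apply Hmon; lra).
  assert (HFinvb : Finv (F bstar) = bstar).
  { destruct (HI (F bstar)) as [Hr He]; [lra|]. apply Hinj; auto. }
  assert (Hbpos : 0 < bstar).
  { destruct (Req_dec bstar 0) as [e|e]; [rewrite e, H0 in Hpos; lra | lra]. }
  assert (Hbv : bstar < v).
  { destruct (Rlt_or_le bstar v) as [h|h]; [exact h|exfalso].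
    assert (HU0 := Hmax 0 ltac:(lra)). unfold U in HU0. rewrite H0 in HU0.
    assert (Hc2 : 0 < F (bstar / 2)) by (rewrite <- H0; apply SM; lra).
    assert (HU2 := Hmax (bstar/2) ltac:(lra)). unfold U in HU2.
    assert ((v - bstar) * F bstar <= 0) by nra.
    assert (v = bstar) by nra. subst v. nra. }
  set (qs := F bstar) in *.
  set (A := (v - bstar) * qs).
  assert (HA0 : 0 < A) by (unfold A; nra).
  assert (HWs : W F Finv v qs = A) by (unfold W, U; rewrite HFinvb; reflexivity).
  rewrite HWs.
  assert (Hder : is_derive (U F v) bstar (-1 * F bstar + (v - bstar) * f bstar)).
  { unfold U.
    change (-1 * F bstar + (v - bstar) * f bstar) with
      (plus (mult (-1) (F bstar)) (mult (v - bstar) (f bstar))).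
    apply (is_derive_mult (fun t => v - t) F).
    - auto_derive; [trivial | ring].
    - apply Hd; lra.
    - intros; apply Rmult_comm. }
  assert (HFOC : (v - bstar) * f bstar = qs).
  { apply is_derive_Reals in Hder.
    assert (pr : derivable_pt (U F v) bstar) by (exists (-1 * F bstar + (v - bstar) * f bstar); exact Hder).
    assert (Hm := deriv_maximum (U F v) 0 1 bstar pr ltac:(lra) ltac:(lra)
                    (fun x h1 h2 => Hmax x ltac:(lra))).
    rewrite (derive_pt_eq_0 _ _ _ pr Hder) in Hm. unfold qs; lra. }
  assert (HFp : forall x, 0 < x <= 1 -> 0 < F x).
  { intros x hx. rewrite <- H0. apply SM; lra. }
  (* tangent inequality *)
  assert (Htan : forall b, 0 < b < 1 -> ln (F b) - ln qs <= (b - bstar) / (v - bstar)).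
  { intros b hb.
    set (k := / (v - bstar)).
    assert (Hk : f bstar / qs = k).
    { unfold k. rewrite <- HFOC.
      assert (f bstar <> 0) by (intro e; rewrite e in HFOC; rewrite Rmult_0_r in HFOC; unfold qs in *; lra).
      field. split; solve [auto | intro; lra]. }
    set (g := fun t => ln (F t) - k * t).
    assert (Hgd : forall t, 0 < t < 1 -> is_derive g t (f t / F t - k)).
    { intros t ht. unfold g.
      replace (f t / F t - k) with (minus (f t / F t) (k * 1)) by (unfold minus, plus, opp; simpl; ring).
      apply (is_derive_minus (fun t => ln (F t)) (fun t => k * t)).
      - unfold Rdiv.
        apply (is_derive_comp ln F t (/ F t) (f t)).
        + apply is_derive_ln. apply HFp; lra.
        + apply Hd; lra.
      - auto_derive; [trivial|ring]. }
    assert (Hmv := MVT_gen g b bstar (fun t => f t / F t - k)).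
    simpl in Hmv.
    destruct Hmv as (c & Hc1 & Hc2).
    - intros x hx. apply Hgd.
      assert (Rmin b bstar > 0) by (apply Rmin_glb_lt; lra).
      assert (Rmax b bstar < 1) by (apply Rmax_lub_lt; lra). lra.
    - intros x hx. apply continuity_pt_filterlim.
      apply (ex_derive_continuous g). eexists. apply Hgd.
      assert (Rmin b bstar > 0) by (apply Rmin_glb_lt; lra).
      assert (Rmax b bstar < 1) by (apply Rmax_lub_lt; lra). lra.
    - assert (Hgle : g b <= g bstar).
      { assert (Rmin b bstar > 0) by (apply Rmin_glb_lt; lra).
        assert (Rmax b bstar < 1) by (apply Rmax_lub_lt; lra).
        assert (0 < c < 1) by lra.
        destruct (Rle_or_lt c bstar) as [hc|hc].
        -
          assert (k <= f c / F c).
          { rewrite <- Hk. destruct (Req_dec c bstar) as [e|e]; [subst c; unfold qs; lra|].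
            left. apply Hlc; lra. }
          destruct (Rle_or_lt b bstar) as [hb'|hb'].
          + nra.
          + (* b > bstar, c in [bstar, b], so c = bstar *)
            rewrite Rmin_right in Hc1 by lra. assert (c = bstar) by lra. subst c.
            assert (Hz : f bstar / F bstar - k = 0) by (fold qs; lra). rewrite Hz in Hc2. lra.
        - assert (f c / F c < k).
          { rewrite <- Hk. apply Hlc; lra. }
          destruct (Rle_or_lt b bstar) as [hb'|hb'].
          + rewrite Rmax_right in Hc1 by lra. lra.
          + nra. }
      unfold g in Hgle. fold qs in Hgle.
      assert (HK : (b - bstar) / (v - bstar) = k * (b - bstar)) by (unfold k; field; lra).
      rewrite HK. lra. }
  destruct (Req_dec q 0) as [e0|n0].
  { subst q. unfold W, U. destruct (HI 0) as [_ He]; [lra|]. rewrite He, Rmult_0_r. assert (Hq2 : (qs - 0) ^ 2 <= 1) by nra. assert (/ 4 * (qs - 0) ^ 2 * A <= /4 * A) by (apply Rmult_le_compat_r; lra). lra. }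
  destruct (Req_dec q 1) as [e1|n1].
  { subst q. unfold W, U. destruct (HI 1) as [Hr He]; [lra|]. rewrite He.
    assert (Finv 1 = 1) by (apply Hinj; [lra|lra|rewrite He; auto]).
    rewrite H, Rmult_1_r. assert (Hq2 : (qs - 1) ^ 2 <= 1) by nra. assert (/ 4 * (qs - 1) ^ 2 * A <= /4 * A) by (apply Rmult_le_compat_r; lra). lra. }
  destruct (HI q) as [Hr He]; [lra|].
  set (b := Finv q) in *.
  assert (hb : 0 < b < 1).
  { split.
    - destruct (Req_dec b 0) as [e|e]; [rewrite e, H0 in He; lra|lra].
    - destruct (Req_dec b 1) as [e|e]; [rewrite e, H1 in He; lra|lra]. }
  assert (HT := Htan b hb). rewrite He in HT.
  unfold W, U. fold b. rewrite He.
  set (a := sqrt q). set (c := sqrt qs).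
  assert (Ha : 0 < a) by (apply sqrt_lt_R0; lra).
  assert (Hcp : 0 < c) by (apply sqrt_lt_R0; lra).
  assert (Haa : a * a = q) by (apply sqrt_sqrt; lra).
  assert (Hcc : c * c = qs) by (apply sqrt_sqrt; lra).
  assert (Hlnq : ln q = 2 * ln a) by (rewrite <- Haa, ln_mult; lra).
  assert (Hlnqs : ln qs = 2 * ln c) by (rewrite <- Hcc, ln_mult; lra).
  assert (Hexp : a * (1 + (ln c - ln a)) <= c).
  { assert (E := exp_ineq1_le (ln c - ln a)).
    unfold Rminus in E. rewrite exp_plus, exp_Ropp, !exp_ln in E by lra.
    apply (Rmult_le_compat_l a) in E; [|lra].
    replace (a * (c * / a)) with c in E by (field; lra). unfold Rminus. lra. }
  assert (Hs : 2 * (v - bstar) * (a - c) <= a * (b - bstar)).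
  { assert (Hd2 : 2 * (ln a - ln c) <= (b - bstar) / (v - bstar)) by lra.
    apply (Rmult_le_compat_l (v - bstar)) in Hd2; [|lra].
    replace ((v - bstar) * ((b - bstar) / (v - bstar))) with (b - bstar) in Hd2 by (field; lra).
    nra. }
  assert (Hkey : (v - b) * q <= (v - bstar) * (2 * c * a - a * a)).
  { rewrite <- Haa. nra. }
  assert (Ha1 : a <= 1) by (rewrite <- sqrt_1; apply sqrt_le_1_alt; lra).
  assert (Hc1 : c <= 1) by (rewrite <- sqrt_1; apply sqrt_le_1_alt; lra).
  rewrite <- Hcc, <- Haa. unfold A. rewrite <- Hcc.
  rewrite <- Haa in Hkey.
  assert (Hsq : (c*c - a*a)^2 = (c - a)^2 * (c + a)^2) by ring.
  assert (Hbd : c * c * (c + a) ^ 2 <= 4) by nra.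
  assert (HP : 0 <= (v - bstar) * (c - a)^2) by (apply Rmult_le_pos; [lra | apply pow2_ge_0]).
  assert (HR : / 4 * (c * c - a * a) ^ 2 * ((v - bstar) * (c * c))
     = / 4 * ((v - bstar) * (c - a)^2) * (c * c * (c + a) ^ 2)) by ring.
  rewrite HR.
  assert (HR2 : / 4 * ((v - bstar) * (c - a)^2) * (c * c * (c + a) ^ 2) <=
                / 4 * ((v - bstar) * (c - a)^2) * 4).
  { apply Rmult_le_compat_l; [lra | exact Hbd]. }
  assert (HL : (v - bstar) * (c * c) - (v - b) * (a * a) >= (v - bstar) * (c - a)^2).
  { assert (E : (v - bstar) * (c - a)^2 = (v - bstar) * (c * c) - (v - bstar) * (2 * c * a - a * a)) by ring.
    lra. }
  lra.
Qed.
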